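(* Let $h,n,m\in\mathbb{N}$, and let $q_1,\ldots,q_h$ be distinct primes with $q_j\nmid mn$ for all $j$. For each $j$ and each $i\in\{1,\dots,h\}$ let $s_{i,j}\subseteq\{1,\ldots,q_j-1\}$, with $s_{i_1,j}\cap s_{i_2,j}=\emptyset$ for all $i_1\ne i_2$ (the sets $s_{i,j}$ may be empty). Let $S_{i,j}=\sum_{a\in s_{i,j}}e\big(\frac{na}{mq_j}\big)$. Suppose that $s_{i,i}\ne\emptyset$ for every $i$. Then $\det\big([S_{i,j}]_{1\le i,j\le h}\big)\ne0$.
   Context: $e(x):=e^{2\pi i x}$. *)

(* Defs.v *)
From HB Require Import structures.
From mathcomp Require Import all_boot all_order all_algebra.
From mathcomp Require Import complex.
From mathcomp Require Import reals trigo.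
Set Implicit Arguments. Unset Strict Implicit. Unset Printing Implicit Defensive.
Import Order.TTheory GRing.Theory Num.Theory.
Local Open Scope ring_scope.
Local Open Scope complex_scope.

Definition e_ (R : realType) (x : R) : R[i] :=
  (cos (2 * pi * x)) +i* (sin (2 * pi * x)).

(* Main.v *)
Require Import Defs.
From HB Require Import structures.
From mathcomp Require Import all_boot all_order all_algebra.
From mathcomp Require Import complex.
From mathcomp Require Import reals trigo.
From mathcomp Require Import all_field.
From mathcomp Require Import ring lra zify.
Import Order.TTheory GRing.Theory Num.Theory.
Local Open Scope ring_scope.
Section E.
Variable R : realType.
Local Open Scope complex_scope.

Lemma eD (x y : R) : e_ (x + y) = e_ x * e_ y.
Proof.
rewrite /e_ mulrDr cosD sinD /=. congr (_ +i* _); ring.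
Qed.

Lemma e0 : e_ (0 : R) = 1.
Proof. by rewrite /e_ mulr0 cos0 sin0. Qed.

Lemma e1 : e_ (1 : R) = 1.
Proof. by rewrite /e_ mulr1 mulr_natl cos2pi sin2pi. Qed.

Lemma eMn (x : R) k : e_ (k%:R * x) = e_ x ^+ k.
Proof.
elim: k => [|k IH]; first by rewrite mul0r e0.
by rewrite -addn1 natrD mulrDl mul1r eD IH exprD expr1.
Qed.

Lemma e_neq1 (x : R) : 0 < x < 1 -> e_ x != 1.
Proof.
move=> /andP[x0 x1]; apply/negP => /eqP[] /eqP.
have -> : 2 * pi * x = pi * x + pi * x by ring.
rewrite cosD.
have hs : 0 < sin (pi * x).
  apply: sin_gt0_pi; apply/andP; split; first by rewrite mulr_gt0 // pi_gt0.
  by rewrite -[X in _ < X]mulr1 ltr_pM2l // pi_gt0.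
have := cos2Dsin2 (pi * x).
move=> h2 /eqP h1 _.
nra.
Qed.

End E.

Lemma orth (F : fieldType) (q : nat) (g : F) k : q.-primitive_root g ->
  \sum_(t < q) g ^+ (t * k) = if (q %| k)%N then q%:R else 0.
Proof.
move=> pg; rewrite (prim_order_dvd pg).
under eq_bigr => t _ do rewrite mulnC exprM.
case: eqP => [->|/eqP ne].
  by under eq_bigr => t _ do rewrite expr1n; rewrite sumr_const card_ord.
have : (g ^+ k) ^+ q - 1 = 0 by rewrite -exprM mulnC exprM (prim_expr_order pg) expr1n subrr.
rewrite subrX1 => /eqP; rewrite mulf_eq0 subr_eq0 (negbTE ne) /= => /eqP ->.
by [].
Qed.

Lemma dvd_shift q a b : (a < q)%N -> (b < q)%N -> (q %| q - b + a)%N = (a == b).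
Proof.
move=> aq bq; apply/idP/eqP => [/dvdnP [k hk]|->]; last by rewrite subnK ?dvdnn // ltnW.
case: k hk => [|[|k]] hk; [lia|lia|].
have : (k.+2 * q >= 2 * q)%N by rewrite leq_mul2r; apply/orP; right.
lia.
Qed.

Lemma coprime_1N N t : coprime (1 + N * t) N.
Proof. by rewrite /coprime gcdnC addnC mulnC gcdnMDl gcdn1. Qed.

Lemma bad_uniq q N (t1 t2 : 'I_q) : prime q -> coprime N q ->
  ~~ coprime (1 + N * t1) q -> ~~ coprime (1 + N * t2) q -> t1 = t2.
Proof.
move=> pq cNq; rewrite !(coprime_sym _ q) !prime_coprime // !negbK.
wlog le12 : t1 t2 / (t1 <= t2)%N.
  move=> H h1 h2; case: (leqP t1 t2) => [l|/ltnW l]; first exact: H.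
  by apply/esym/H.
move=> h1 h2; apply/val_inj/eqP => /=.
have := dvdn_sub h2 h1.
have -> : ((1 + N * t2) - (1 + N * t1) = N * (t2 - t1))%N by rewrite mulnBr; lia.
rewrite Gauss_dvdr; last by rewrite coprime_sym.
move=> hd; have := ltn_ord t2; have := ltn_ord t1.
case: (posnP (t2 - t1)) => [z|p]; first by lia.
have := dvdn_leq p hd. lia.
Qed.

Lemma lemK (q N : nat) (eta : algC) (c : 'I_q -> algC) :
  prime q -> coprime N q -> eta ^+ (N * q) = 1 -> q.-primitive_root (eta ^+ N) ->
  (forall u : {rmorphism algC -> algC}, (forall x, x ^+ N = 1 -> u x = x) ->
     forall a, u (c a) = c a) ->
  (forall a : 'I_q, val a = 0%N -> c a = 0) ->
  \sum_(a < q) c a * eta ^+ a = 0 -> forall a, c a = 0.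
Proof.
move=> pq cNq eNq pg hfix h0 hsum.
set g := eta ^+ N.
set d := fun a : 'I_q => c a * eta ^+ a.
set E := fun t : 'I_q => \sum_(a < q) d a * g ^+ (t * a).
have step1 : forall t : 'I_q, coprime (1 + N * t) q -> E t = 0.
  move=> t ct.
  have cop : coprime (1 + N * t) (N * q) by rewrite coprimeMr coprime_1N.
  have [u hu] := Qn_aut_exists cop.
  have hfu : forall x, x ^+ N = 1 -> u x = x.
    move=> x xN; rewrite hu; last by rewrite exprM xN expr1n.
    by rewrite exprD expr1 exprM xN expr1n mulr1.
  have := congr1 u hsum; rewrite rmorph_sum rmorph0 => H.
  rewrite -[RHS]H /E; apply: eq_bigr => a _.
  rewrite rmorphM rmorphXn (hfix u hfu) hu // /d /g.
  by rewrite exprD expr1 exprMn -mulrA -!exprM mulnA.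
have step2 : forall t, E t = 0.
  move=> t; case: (boolP (coprime (1 + N * t) q)) => [ct|bt]; first exact: step1.
  have tot : \sum_(t < q) E t = 0.
    rewrite /E exchange_big /=; apply: big1 => a _.
    rewrite -mulr_sumr orth //.
    case: (posnP a) => [a0|ap]; first by rewrite /d (h0 _ a0) !mul0r.
    case: ifP => [hd|_]; last by rewrite mulr0.
    by have := dvdn_leq ap hd; rewrite leqNgt ltn_ord.
  move: tot; rewrite (bigD1 t) //= big1 ?addr0 // => t' nt.
  apply: step1; case: (boolP (coprime _ _)) => // bt'.
  by rewrite (@bad_uniq q N t' t pq cNq bt' bt) eqxx in nt.
move=> b.
have hq : (q%:R : algC) != 0 by rewrite pnatr_eq0 -lt0n prime_gt0.
have key : \sum_(t < q) g ^+ (t * (q - b)) * E t = q%:R * d b.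
  rewrite /E.
  transitivity (\sum_(t < q) \sum_(a < q) d a * g ^+ (t * (q - b + a))).
    apply: eq_bigr => t _; rewrite mulr_sumr; apply: eq_bigr => a _.
    by rewrite mulrCA -exprD -mulnDr.
  rewrite exchange_big /= (bigD1 b) //= [X in _ + X]big1.
    by rewrite addr0 -mulr_sumr orth // dvd_shift // eqxx mulrC.
  move=> a nab; rewrite -mulr_sumr orth // dvd_shift //.
  by have /negbTE -> : (a : nat) != b by []; rewrite mulr0.
have : q%:R * d b = 0.
  by rewrite -key; apply: big1 => t _; rewrite step2 mulr0.
move/eqP; rewrite mulf_eq0 (negbTE hq) /= /d mulf_eq0 => /orP[/eqP //|].
rewrite expf_eq0 => /andP[_ /eqP e0].
have Npos : (0 < N * q)%N.
  rewrite muln_gt0 (prime_gt0 pq) andbT.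
  by case: (posnP N) cNq => // ->; rewrite /coprime gcd0n => /eqP q1; rewrite q1 in pq.
by move: eNq; rewrite e0 expr0n -[(N * q)%N]prednK //= => /eqP; rewrite eq_sym oner_eq0.
Qed.

Lemma coprime_prod_primes (I : finType) (P : pred I) (q : I -> nat) p :
  prime p -> (forall l, P l -> prime (q l) /\ q l != p) ->
  coprime (\prod_(l | P l) q l) p.
Proof.
move=> pp hq; apply: (big_ind (fun x => coprime x p)).
- exact: coprime1n.
- by move=> x y; rewrite coprimeMl => -> ->.
- by move=> l /hq [pl nl]; rewrite coprime_sym prime_coprime // dvdn_prime2 // eq_sym.
Qed.

Lemma core (h : nat) : forall (m : nat) (q : 'I_h -> nat) (eta : 'I_h -> algC)
 (s : forall i j : 'I_h, {set 'I_(q j)}),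
 (forall j, prime (q j)) -> injective q -> (forall j, coprime m (q j)) ->
 (forall j, eta j ^+ (m * q j) = 1) -> (forall j, (q j).-primitive_root (eta j ^+ m)) ->
 (forall i j (a : 'I_(q j)), a \in s i j -> (0 < a)%N) ->
 (forall j i1 i2, i1 != i2 -> [disjoint s i1 j & s i2 j]) ->
 (forall i, s i i != set0) ->
 \det (\matrix_(i < h, j < h) \sum_(a in s i j) eta j ^+ a) != 0.
Proof.
elim: h => [|h IH] m q eta s qp qi cm he hp sr sd sn.
  by rewrite det_mx00 oner_neq0.
set j0 : 'I_h.+1 := ord_max.
set A := \matrix_(i < h.+1, j < h.+1) \sum_(a in s i j) eta j ^+ a.
set P := (\prod_(l | l != j0) q l)%N.
set N := (m * P)%N.
have cPq0 : coprime P (q j0).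
  apply: coprime_prod_primes => // l nl; split => //.
  by rewrite (inj_eq qi).
have hfixN : forall l, l != j0 -> eta l ^+ N = 1.
  move=> l nl.
  have : (q l %| P)%N by rewrite /P (bigD1 l) //= dvdn_mulr.
  case/dvdnP => k Pk.
  by rewrite /N Pk mulnCA exprM exprAC he expr1n.
have minor : \det (row' j0 (col' j0 A)) != 0.
  have := IH m (fun j => q (lift j0 j)) (fun j => eta (lift j0 j))
    (fun i j => s (lift j0 i) (lift j0 j)).
  have -> : row' j0 (col' j0 A) = \matrix_(i < h, j < h)
     \sum_(a in s (lift j0 i) (lift j0 j)) eta (lift j0 j) ^+ a.
    by apply/matrixP => i j; rewrite !mxE.
  apply => //.
  - by move=> i1 i2 /qi /lift_inj.
  - by move=> i j a ha; exact: (sr _ _ _ ha).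
  - move=> j i1 i2 ni; apply: (sd (lift j0 j) (lift j0 i1) (lift j0 i2)).
    by rewrite (inj_eq lift_inj).
apply/negP => /eqP hdet.
rewrite (expand_det_col _ j0) in hdet.
pose c : 'I_(q j0) -> algC := fun a => \sum_(i | a \in s i j0) cofactor A i j0.
have hsum : \sum_(a < q j0) c a * eta j0 ^+ a = 0.
  rewrite -[RHS]hdet /c.
  under eq_bigr => a _ do rewrite mulr_suml big_mkcond /=.
  rewrite exchange_big /=; apply: eq_bigr => i _.
  rewrite /A mxE mulr_suml [RHS]big_mkcond /=; apply: eq_bigr => a _.
  by case: ifP => _ //; rewrite mulrC.
have cNq : coprime N (q j0) by rewrite coprimeMl cm.
have K := @lemK (q j0) N (eta j0) c (qp j0) cNq _ _ _ _ hsum.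
have {}K : forall a, c a = 0.
  apply: K.
  - by rewrite /N mulnAC exprM he expr1n.
  - by rewrite /N exprM prim_root_exp_coprime.
  - move=> u hu a; rewrite /c rmorph_sum; apply: eq_bigr => i _.
    rewrite /cofactor rmorphM rmorph_sign -det_map_mx; congr (_ * \det _).
    apply/matrixP => i' j'; rewrite !mxE rmorph_sum; apply: eq_bigr => a' _.
    by rewrite rmorphXn hu // hfixN // eq_sym neq_lift.
  - move=> a a0; rewrite /c big1 // => i ha.
    by have := sr _ _ _ ha; rewrite a0.
have [a ha] := set0Pn _ (sn j0).
have := K a; rewrite /c (bigD1 j0) //= big1 ?addr0.
  by move/eqP; rewrite /cofactor mulf_eq0 signr_eq0 (negbTE minor).
move=> i /andP[hai nij].
by rewrite (disjointFl (sd j0 i j0 nij) ha) in hai.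
Qed.

Lemma root_dvd (F : fieldType) (p r : {poly F}) x : (p %| r) -> root p x -> root r x.
Proof. by case/dvdpP => k ->; rewrite rootM => ->; rewrite orbT. Qed.

Lemma phi_root (F : numFieldType) (M : nat) (z : F) :
  M.-primitive_root z -> root (map_poly intr 'Phi_M) z.
Proof.
move=> pz; have M0 := prim_order_gt0 pz.
have hprod : forall d, (0 < d)%N -> \prod_(d' <- divisors d) (map_poly intr 'Phi_d').[z] = z ^+ d - 1.
  move=> d d0; rewrite -horner_prod -rmorph_prod prod_Cyclotomic //.
  by rewrite rmorphB rmorphXn /= map_polyX rmorph1 !hornerE.
have := hprod M M0; rewrite (prim_expr_order pz) subrr => /eqP.
rewrite prodf_seq_eq0 => /hasP [d dM /= /eqP rd].
have d0 : (0 < d)%N by move: dM; rewrite -dvdn_divisors //; apply: dvdn_gt0.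
case: (eqVneq d M) => [<-|ndM]; first by apply/eqP.
have : z ^+ d - 1 == 0.
  by rewrite -hprod // prodf_seq_eq0; apply/hasP; exists d; rewrite ?divisors_id //= rd.
rewrite subr_eq0 -(prim_order_dvd pz) => hMd.
have := dvdn_leq d0 hMd; move: dM; rewrite -dvdn_divisors // => /(dvdn_leq M0) dM.
by move=> Md; move: ndM; rewrite eqn_leq dM Md.
Qed.

Lemma cyc_min (x : algC) (M : nat) (r : {poly rat}) : M.-primitive_root x ->
  root (map_poly ratr r) x = (map_poly intr 'Phi_M %| r).
Proof.
move=> px; have [pq [Hm _ Hr]] := minCpolyP x.
rewrite Hr; congr (_ %| _).
apply: (@map_inj_poly _ algC ratr (fmorph_inj _) (rmorph0 _)).
rewrite -Hm (minCpoly_cyclotomic px) -(Cintr_Cyclotomic px) -map_poly_comp.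
by apply: eq_map_poly => k /=; rewrite ratr_int.
Qed.

Lemma transfer (F : numFieldType) (M : nat) (z : F) (zeta : algC) (p : {poly rat}) :
  M.-primitive_root z -> M.-primitive_root zeta ->
  (map_poly ratr p).[z] = 0 -> (map_poly ratr p).[zeta] = 0.
Proof.
move=> pz pzeta pz0.
set mu : {poly rat} := map_poly intr 'Phi_M.
have muz : root (map_poly ratr mu) z.
  rewrite /mu -map_poly_comp.
  have -> : map_poly (ratr \o intr) 'Phi_M = map_poly intr 'Phi_M :> {poly F}.
    by apply: eq_map_poly => k /=; rewrite ratr_int.
  exact: phi_root.
have mu0 : mu != 0.
  by apply: monic_neq0; apply: monic_map; apply: Cyclotomic_monic.
set g := gcdp mu p.
have gz : root (map_poly ratr g) z.
  have := egcdpE mu p; set e := egcdp mu p => /eqpP [[c1 c2] /andP[c10 c20] /= he].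
  have : root (map_poly ratr (c1 *: g)) z.
    rewrite /g he linearZ /= rootZ ?fmorph_eq0 //.
    by rewrite rmorphD !rmorphM /= /root !hornerE pz0 (eqP muz) !mulr0 addr0.
  by rewrite linearZ /= rootZ // fmorph_eq0.
have g0 : g != 0 by rewrite gcdp_eq0 negb_and mu0.
have sg : size (map_poly (ratr : rat -> algC) g) != 1%N.
  rewrite size_map_poly; apply/eqP => sg1.
  have gc : g = (g`_0)%:P by apply: size1_polyC; rewrite sg1.
  move: gz g0; rewrite gc map_polyC /= /root hornerC fmorph_eq0 => cz.
  by rewrite (eqP cz) eqxx.
have [x rx] := closed_rootP _ sg.
have px : M.-primitive_root x.
  have : root (map_poly ratr mu) x by apply: root_dvd rx; rewrite dvdp_map dvdp_gcdl.
  rewrite /mu -map_poly_comp.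
  have -> : map_poly (ratr \o intr) 'Phi_M = map_poly intr 'Phi_M :> {poly algC}.
    by apply: eq_map_poly => k /=; rewrite ratr_int.
  by rewrite (Cintr_Cyclotomic pzeta) root_cyclotomic.
move: rx; rewrite (@cyc_min x M g px) => mug.
have : root (map_poly ratr p) zeta.
  by rewrite (@cyc_min zeta M p pzeta); apply: dvdp_trans mug (dvdp_gcdr _ _).
by move/eqP.
Qed.


Lemma e_prim (R : realType) (M : nat) : (0 < M)%N -> M.-primitive_root (e_ (M%:R^-1 : R)).
Proof.
move=> M0.
have zM : e_ (M%:R^-1 : R) ^+ M = 1.
  by rewrite -eMn mulfV ?pnatr_eq0 -?lt0n // e1.
have [d pd dM] := prim_order_exists M0 zM.
suff Md : M = d by move: pd; rewrite -Md.
have d0 := prim_order_gt0 pd.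
apply/eqP; rewrite eqn_leq (dvdn_leq M0 dM) andbT leqNgt; apply/negP => dlt.
suff H : 0 < (d%:R * M%:R^-1 : R) < 1.
  by move: (@e_neq1 R _ H); rewrite eMn (prim_expr_order pd) eqxx.
apply/andP; split.
  by rewrite mulr_gt0 // ?invr_gt0 ltr0n.
by rewrite ltr_pdivrMr ?ltr0n // mul1r ltr_nat.
Qed.

Theorem lemma4p5 (R : realType) (h n m : nat) (q : 'I_h -> nat)
  (q_prime : forall j, prime (q j))
  (q_inj : injective q)
  (q_ndvd : forall j, ~~ (q j %| m * n)%N)
  (s : forall i j : 'I_h, {set 'I_(q j)})
  (s_range : forall (i j : 'I_h) (a : 'I_(q j)), a \in s i j -> (0 < a)%N)
  (s_disj : forall (j i1 i2 : 'I_h), i1 != i2 -> [disjoint s i1 j & s i2 j])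
  (s_diag : forall i : 'I_h, s i i != set0) :
  let S := fun i j : 'I_h =>
    \sum_(a in s i j) e_ ((n * a)%:R / (m * q j)%:R : R) in
  \det (\matrix_(i < h, j < h) S i j) != 0.
Proof.
change (\det (\matrix_(i < h, j < h)
  \sum_(a in s i j) e_ ((n * a)%:R / (m * q j)%:R : R)) != 0).
case: (posnP h) => [h0|hpos].
  by move: (\matrix_(i < h, j < h) _); rewrite h0 => A; rewrite det_mx00 oner_neq0.
pose j1 : 'I_h := Ordinal hpos.
have cm : forall j, coprime m (q j).
  move=> j; rewrite coprime_sym prime_coprime //; apply: contra (q_ndvd j).
  exact: dvdn_mulr.
have cn : forall j, coprime n (q j).
  move=> j; rewrite coprime_sym prime_coprime //; apply: contra (q_ndvd j).
  exact: dvdn_mull.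
have m0 : (0 < m)%N.
  by case: (posnP m) (q_ndvd j1) => // ->; rewrite mul0n dvdn0.
set Q := (\prod_(j < h) q j)%N.
set M := (m * Q)%N.
pose P := fun j : 'I_h => (\prod_(l | l != j) q l)%N.
have QP : forall j, Q = (q j * P j)%N by move=> j; rewrite /Q (bigD1 j).
have M0 : (0 < M)%N.
  by rewrite /M muln_gt0 m0 (QP j1) muln_gt0 prime_gt0 //= lt0n; apply/negP => /eqP P0;
    move: (QP j1); rewrite P0 muln0 => Q0; move: (QP j1) => _ ;
    move: Q0; rewrite /Q => /eqP; rewrite prod_nat_seq_eq0 => /hasP [l _ /= /eqP ql];
    have := prime_gt0 (q_prime l); rewrite ql.
have P0 : forall j, (0 < P j)%N.
  by move=> j; move: M0; rewrite /M (QP j) !muln_gt0 => /andP[_ /andP[_ ->]].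
have [zeta pzeta] := C_prim_root_exists M0.
set z : R[i] := e_ (M%:R^-1 : R).
have pz : M.-primitive_root z by apply: e_prim.
pose B : 'M[{poly rat}]_h := \matrix_(i < h, j < h) \sum_(a in s i j) 'X^(n * a * P j).
have cfz : commr_rmorph (ratr : rat -> R[i]) z by move=> a; apply: mulrC.
have cfzeta : commr_rmorph (ratr : rat -> algC) zeta by move=> a; apply: mulrC.
have hF : \det (\matrix_(i < h, j < h)
  \sum_(a in s i j) e_ ((n * a)%:R / (m * q j)%:R : R)) = horner_morph cfz (\det B).
  rewrite -det_map_mx; congr (\det _); apply/matrixP => i j; rewrite !mxE.
  rewrite rmorph_sum; apply: eq_bigr => a _.
  transitivity (z ^+ (n * a * P j)); last first.
    have hX : forall k, horner_morph cfz 'X^k = z ^+ k by move=> k; rewrite /horner_morph map_polyXn hornerXn.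
    exact: esym (hX _).
  rewrite /z -eMn; congr e_.
  rewrite /M (QP j) !natrM.
  have : (P j)%:R != 0 :> R by rewrite pnatr_eq0 -lt0n.
  have : (q j)%:R != 0 :> R by rewrite pnatr_eq0 -lt0n prime_gt0.
  have : m%:R != 0 :> R by rewrite pnatr_eq0 -lt0n.
  move=> *; field.
  by apply/and3P.
have hC : \det (\matrix_(i < h, j < h) \sum_(a in s i j) (zeta ^+ (n * P j)) ^+ a)
    = horner_morph cfzeta (\det B).
  rewrite -det_map_mx; congr (\det _); apply/matrixP => i j; rewrite !mxE.
  rewrite rmorph_sum; apply: eq_bigr => a _.
  have hX : forall k, horner_morph cfzeta 'X^k = zeta ^+ k.
    by move=> k; rewrite /horner_morph map_polyXn hornerXn.
  transitivity (zeta ^+ (n * a * P j)); last exact: esym (hX _).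
  by rewrite -exprM mulnAC.
have E1 : forall j, (zeta ^+ (n * P j)) ^+ (m * q j) = 1.
  move=> j; rewrite -exprM.
  have -> : (n * P j * (m * q j) = M * n)%N by rewrite /M (QP j); nia.
  by rewrite exprM (prim_expr_order pzeta) expr1n.
have E2 : forall j, (q j).-primitive_root ((zeta ^+ (n * P j)) ^+ m).
  move=> j.
  have dM : (q j %| M)%N by rewrite /M (QP j) mulnCA dvdn_mulr.
  have h1 := dvdn_prim_root pzeta dM.
  have -> : (zeta ^+ (n * P j)) ^+ m = (zeta ^+ (M %/ q j)) ^+ n.
    rewrite -!exprM; congr (_ ^+ _).
    rewrite /M (QP j) mulnCA mulKn ?prime_gt0 //; nia.
  by rewrite prim_root_exp_coprime.
have := @core h m q (fun j => zeta ^+ (n * P j)) s q_prime q_inj cm E1 E2 s_range s_disj s_diag.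
rewrite hC hF; apply: contra => /eqP hz; apply/eqP.
exact: (@transfer _ M z zeta (\det B) pz pzeta hz).
Qed.
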